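(* Let $\lambda$ be an integer partition of length $k$ with $\lambda^{\perp B}\neq\emptyset$. Then $\lambda$ is novel if and only if the matrix $A^{(\lambda)}$ has rank $k-1$ and $\gcd(\lambda_1,\dots,\lambda_k)=1$.
   Context: An integer partition is $\lambda=(\lambda_1,\dots,\lambda_k)$ with integers $\lambda_1\ge\dots\ge\lambda_k\ge 1$; $k$ is its length. For $v\in\mathbb{Z}^k$ let $v^{\perp B}=\{x\in\{-1,1\}^k: v\cdot x=0\}$; for a partition, $\lambda^{\perp B}$ is this set for $(\lambda_1,\dots,\lambda_k)$. If $|\lambda^{\perp B}|=2p>0$, $A^{(\lambda)}$ is the $k\times p$ matrix whose columns are the elements of $\lambda^{\perp B}$ with first coordinate $+1$. $V_\lambda\subset\mathbb{Z}^k$ is the set of vectors obtained from $(\lambda_1,\dots,\lambda_k)$ by permuting coordinates and changing signs of some coordinates, with first coordinate positive. For $I\subset\{1,\dots,m\}$, $\mathrm{Proj}_I:\{-1,1\}^m\to\{-1,1\}^{|I|}$ keeps the coordinates indexed by $I$. Reduction: for partitions $\mu$ of length $m$ and $\lambda$ of length $k\le m$, $\mu\Rightarrow\lambda$ iff there exist $I\subset\{1,\dots,m\}$, $|I|=k$, and $v\in V_\lambda$ with $\mathrm{Proj}_I(\mu^{\perp B})\subset v^{\perp B}$. $\mu$ strictly reduces to $\lambda$ iff $\mu\Rightarrow\lambda$ and not $\lambda\Rightarrow\mu$. Partitions $\lambda,\mu$ of the same length are equivalent iff there is $w\in V_\mu$ with $\lambda^{\perp B}=w^{\perp B}$. A partition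 $\lambda$ is novel iff $\lambda^{\perp B}\neq\emptyset$, $\lambda$ strictly reduces to no partition, and $\lambda$ is lexicographically smallest among partitions equivalent to it. *)

(* Defs.v *)
From HB Require Import structures.
From mathcomp Require Import all_boot all_order all_fingroup all_algebra.
Set Implicit Arguments. Unset Strict Implicit. Unset Printing Implicit Defensive.
Import Order.TTheory GRing.Theory Num.Theory.

Definition is_partition (l : seq nat) : bool :=
  [&& 0 < size l, sorted geq l & all (fun a => 0 < a) l].

(* Sign vectors in {-1,1}^k are encoded as {ffun 'I_k -> bool}, true = +1. *)
Definition signv (b : bool) : int := if b then 1%R else (-1)%R.

(* v^{perp B} for v : Z^k (given as a seq int of size k). *)
Definition perpB (k : nat) (v : seq int) : {set {ffun 'I_k -> bool}} :=
  [set x : {ffun 'I_k -> bool} | (\sum_(i < k) nth 0%R v i * signv (x i))%R == 0%R].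

Definition pvec (l : seq nat) : seq int := map Posz l.

Definition lamperp (l : seq nat) := perpB (size l) (pvec l).

Definition inV (l : seq nat) (v : seq int) : Prop :=
  [/\ size v = size l,
      exists (s : 'S_(size l)) (e : 'I_(size l) -> bool),
        forall i : 'I_(size l), nth 0%R v i = (signv (e i) * nth 0%R (pvec l) (s i))%R
    & (0 < nth 0%R v 0)%R].

(* mu => lambda ; I is given by a strictly increasing map f : 'I_k -> 'I_m *)
Definition reduces (mu l : seq nat) : Prop :=
  size l <= size mu /\
  exists f : 'I_(size l) -> 'I_(size mu),
    (forall i j : 'I_(size l), i < j -> f i < f j) /\
    exists v, inV l v /\
      forall x, x \in lamperp mu -> [ffun j => x (f j)] \in perpB (size l) v.

Definition strictly_reduces (mu l : seq nat) : Prop :=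
  reduces mu l /\ ~ reduces l mu.

Definition equivalent (l mu : seq nat) : Prop :=
  size l = size mu /\ exists w, inV mu w /\ lamperp l = perpB (size l) w.

Fixpoint lexle (s t : seq nat) : bool :=
  match s, t with
  | [::], _ => true
  | _ :: _, [::] => false
  | a :: s', b :: t' => (a < b) || ((a == b) && lexle s' t')
  end.

Definition novel (l : seq nat) : Prop :=
  [/\ lamperp l != set0,
      (forall mu, is_partition mu -> ~ strictly_reduces l mu)
    & (forall mu, is_partition mu -> equivalent l mu -> lexle l mu)].

(* columns of A^(lambda): elements of lambda^{perp B} with first coordinate +1 *)
Definition Apos (l : seq nat) : {set {ffun 'I_(size l) -> bool}} :=
  [set x in lamperp l | [forall i : 'I_(size l), (val i == 0) ==> x i]].

(* A^(lambda) as a rational k x p matrix (column order: enumeration order) *)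
Definition Amat (l : seq nat) : 'M[rat]_(size l, #|Apos l|) :=
  \matrix_(i < size l, j < #|Apos l|) ((signv (enum_val j i))%:~R : rat).

Definition gcd_seq (l : seq nat) : nat := foldr gcdn 0 l.

(* Main.v *)
Require Import Defs.
From HB Require Import structures.
From mathcomp Require Import all_boot all_order all_fingroup all_algebra zify ring.
Set Implicit Arguments. Unset Strict Implicit. Unset Printing Implicit Defensive.
Import Order.TTheory GRing.Theory Num.Theory.
Local Open Scope ring_scope.

Lemma signvN b : signv (~~ b) = - signv b.
Proof. by case: b. Qed.

Lemma signv_sq b : signv b * signv b = 1.
Proof. by case: b. Qed.

Lemma sum_intr k (v : 'I_k -> int) (x : {ffun 'I_k -> bool}) :
  ((\sum_i v i * signv (x i)) == 0) =
  ((\sum_i (v i)%:~R * (signv (x i))%:~R : rat) == 0).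
Proof.
rewrite -(intr_eq0 rat) rmorph_sum /=.
by under eq_bigr do rewrite intrM.
Qed.

Lemma in_perpB k v x : (x \in perpB k v) =
  ((\sum_(i < k) ((nth 0 v i)%:~R * (signv (x i))%:~R : rat)) == 0).
Proof. by rewrite inE sum_intr. Qed.

Lemma nth_pvec l (i : nat) : nth 0 (pvec l) i = Posz (nth 0%N l i).
Proof.
rewrite /pvec; case: (ltnP i (size l)) => H; first by rewrite (nth_map 0%N).
by rewrite !nth_default ?size_map.
Qed.

Lemma in_lamperp l x : (x \in lamperp l) =
  ((\sum_(i < size l) ((nth 0%N l i)%:R * (signv (x i))%:~R : rat)) == 0).
Proof.
rewrite /lamperp in_perpB; by under eq_bigr do rewrite nth_pvec.
Qed.

Definition negv k (x : {ffun 'I_k -> bool}) : {ffun 'I_k -> bool} := [ffun i => ~~ x i].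

Lemma sum_negv k (u : 'I_k -> rat) x :
  \sum_i u i * (signv (negv x i))%:~R = - \sum_i u i * (signv (x i))%:~R.
Proof.
rewrite -sumrN; apply: eq_bigr => i _; by rewrite ffunE signvN intrN mulrN.
Qed.

Lemma lamperp_neg l x : x \in lamperp l -> negv x \in lamperp l.
Proof. by rewrite !in_lamperp sum_negv oppr_eq0. Qed.

Lemma Apos_or l x : x \in lamperp l ->
  exists2 y, y \in Apos l & (y = x \/ y = negv x).
Proof.
move=> Hx.
case: (boolP [forall i : 'I_(size l), (val i == 0%N) ==> x i]) => H.
  by exists x; [rewrite inE Hx H | left].
exists (negv x); last by right.
rewrite inE lamperp_neg //=; apply/forallP => i; apply/implyP => /eqP i0.
move/forallPn: H => [j]; rewrite negb_imply => /andP [/eqP j0 xj].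
have -> : i = j by apply: val_inj; rewrite /= i0 j0.
by rewrite ffunE.
Qed.

Lemma Amat_kerP l (u : 'rV[rat]_(size l)) :
  (u *m Amat l = 0) <->
  (forall x, x \in lamperp l -> \sum_i u 0 i * (signv (x i))%:~R = 0).
Proof.
split.
- move/rowP=> H x /Apos_or [y Hy [<-|Hyx]].
  + transitivity ((u *m Amat l) 0 (enum_rank_in Hy y)); last by rewrite H mxE.
    rewrite mxE; apply: eq_bigr => i _; by rewrite mxE enum_rankK_in.
  + have : \sum_i u 0 i * (signv (negv x i))%:~R = 0.
      transitivity ((u *m Amat l) 0 (enum_rank_in Hy y)); last by rewrite H mxE.
      rewrite -Hyx mxE; apply: eq_bigr => i _; by rewrite mxE enum_rankK_in.
    by rewrite sum_negv => /eqP; rewrite oppr_eq0 => /eqP.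
- move=> H; apply/rowP => j; rewrite !mxE.
  have Hj := enum_valP j; rewrite inE in Hj; case/andP: Hj => Hj _.
  apply: etrans (H _ Hj); apply: eq_bigr => i _; by rewrite mxE.
Qed.

Definition lrow l : 'rV[rat]_(size l) := \row_i ((nth 0%N l i)%:R).

Lemma lrow_ker l : lrow l *m Amat l = 0.
Proof.
apply/Amat_kerP => x; rewrite in_lamperp => /eqP H; apply: etrans H.
by apply: eq_bigr => i _; rewrite mxE.
Qed.

Lemma part_pos l i : is_partition l -> (i < size l)%N -> (0 < nth 0%N l i)%N.
Proof.
case/and3P => _ _ /all_nthP H Hi; exact: H.
Qed.

Lemma part_size l : is_partition l -> (0 < size l)%N.
Proof. by case/and3P. Qed.

Lemma lrow_neq0 l (H : is_partition l) : lrow l != 0.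
Proof.
apply/eqP => /rowP /(_ (Ordinal (part_size H))); rewrite !mxE /= => /eqP.
rewrite pnatr_eq0 => /eqP H0.
by have := part_pos H (part_size H); rewrite H0.
Qed.

Lemma key1 l : is_partition l -> \rank (Amat l) = (size l).-1 ->
  forall u : 'rV_(size l), u *m Amat l = 0 -> exists c : rat, u = c *: lrow l.
Proof.
move=> Hl Hr u Hu.
have uK : (u <= kermx (Amat l))%MS by apply/sub_kermxP.
have lK : (lrow l <= kermx (Amat l))%MS by apply/sub_kermxP; exact: lrow_ker.
have rK : \rank (kermx (Amat l)) = 1%N.
  rewrite mxrank_ker Hr; have := part_size Hl; case: (size l) => // n _.
  by rewrite /= subSnn.
have := mxrank_leqif_eq lK; rewrite rank_rV lrow_neq0 // rK /= => /leqif_refl.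
case/andP => _ Kl; apply/sub_rVP; exact: submx_trans uK Kl.
Qed.

Lemma arith1 (n r : nat) : (0 < n)%N -> (r <= n)%N -> (1 <= n - r)%N -> r != n.-1 ->
  (2 <= n - r)%N.
Proof. lia. Qed.

Lemma key2 l (Hl : is_partition l) : \rank (Amat l) != (size l).-1 ->
  exists z : 'rV[rat]_(size l), [/\ z *m Amat l = 0, z != 0 &
     z 0 (Ordinal (part_size Hl)) = 0].
Proof.
move=> Hr.
set K := kermx (Amat l).
have lK : (lrow l <= K)%MS by apply/sub_kermxP; exact: lrow_ker.
have rK1 : (1 <= \rank K)%N.
  by have := mxrankS lK; rewrite rank_rV lrow_neq0.
have rK2 : (2 <= \rank K)%N.
  move: rK1 Hr; rewrite /K mxrank_ker.
  have : (\rank (Amat l) <= size l)%N by exact: rank_leq_row.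
  have := part_size Hl; apply: arith1.
have : ~~ (K <= lrow l)%MS.
  apply/negP => /mxrankS; rewrite rank_rV lrow_neq0 //= => H.
  by have := leq_trans rK2 H.
move/row_subPn => [i Hi].
set u := row i K.
set i0 := Ordinal (part_size Hl).
have uA : u *m Amat l = 0 by apply/sub_kermxP; exact: row_sub.
move: Hi; rewrite -/u => Hi; clearbody u.
exists (lrow l 0 i0 *: u - u 0 i0 *: lrow l); split.
- by rewrite mulmxBl -!scalemxAl uA lrow_ker !scaler0 subr0.
- apply/negP => /eqP H; move: Hi => /negP; apply; apply/sub_rVP.
  have l0 : lrow l 0 i0 != 0.
    rewrite mxE pnatr_eq0; apply/eqP => H0.
    by have := part_pos Hl (part_size Hl); rewrite H0.
  exists (u 0 i0 / lrow l 0 i0).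
  move/eqP: H; rewrite subr_eq0 => /eqP H.
  by rewrite mulrC -scalerA -H scalerA mulVf // scale1r.
- by rewrite !mxE mulrC subrr.
Qed.

Lemma signv_abs (w : int) : w = signv (0 <= w) * `|w|%N.
Proof. by case: w => n /=; rewrite ?mul1r // NegzE mulN1r. Qed.

Lemma construct l (Hl : is_partition l) (Z : 'I_(size l) -> int) :
  Z (Ordinal (part_size Hl)) = 0 -> (exists i, Z i != 0) ->
  (forall x, x \in lamperp l -> \sum_i Z i * signv (x i) = 0) ->
  exists mu, is_partition mu /\ strictly_reduces l mu.
Proof.
move=> Z0 [i1 Zi1] HZ.
set d := Ordinal (part_size Hl).
set supp := [seq i <- enum 'I_(size l) | Z i != 0].
have supp_lt : (size supp < size l)%N.
  rewrite size_filter -[X in (_ < X)%N](size_enum_ord (size l)).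
  rewrite -(count_predC (fun i => Z i != 0)) -addn1 leq_add2l -has_count.
  by apply/hasP; exists d; rewrite ?mem_enum //= Z0 eqxx.
have supp_gt : (0 < size supp)%N.
  by rewrite size_filter -has_count; apply/hasP; exists i1; rewrite ?mem_enum.
set sg : int := if (0 < Z (nth d supp 0))%R then 1 else -1.
set v := [seq sg * Z i | i <- supp].
set mu := sort geq [seq `|Z i|%N | i <- supp].
have size_mu : size mu = size supp by rewrite size_sort size_map.
have nth_supp a : (a < size supp)%N -> Z (nth d supp a) != 0.
  move=> Ha; have := mem_nth d Ha; rewrite mem_filter; by case/andP.
have nth_v a : (a < size supp)%N -> nth 0 v a = sg * Z (nth d supp a).
  by move=> Ha; rewrite (nth_map d).
have sgZ0 : 0 < sg * Z (nth d supp 0).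
  rewrite /sg; have := nth_supp 0%N supp_gt.
  case: ifP => H H0; first by rewrite mul1r.
  rewrite mulN1r oppr_gt0 lt_neqAle H0 /=; move: H; rewrite lt_neqAle eq_sym H0 /=.
  by move/negbT; rewrite -ltNge => /ltW.
have mu_part : is_partition mu.
  apply/and3P; split; first by rewrite size_mu.
    apply: sort_sorted => a b; exact: leq_total.
  apply/allP => a; rewrite mem_sort => /mapP [i Hi ->].
  by rewrite absz_gt0; move: Hi; rewrite mem_filter => /andP [].
exists mu; split => //.
have sorted_supp : sorted (fun i j : 'I_(size l) => (i < j)%N) supp.
  apply: sorted_filter; first by move=> a b c; exact: ltn_trans.
  by have := iota_ltn_sorted 0 (size l); rewrite -val_enum_ord sorted_map.
split; last first.
  by case=> H _; move: H; rewrite size_mu leqNgt supp_lt.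
split; first by rewrite size_mu ltnW.
pose f (a : 'I_(size mu)) := nth d supp a.
exists f; split.
  move=> a b Hab; apply: (sorted_ltn_nth _ d sorted_supp) => //.
  - by move=> x y z; exact: ltn_trans.
  - by rewrite inE -size_mu.
  - by rewrite inE -size_mu.
exists v; split.
  split; first by rewrite size_map size_mu.
    have Hp : perm_eq [seq `|Z i|%N | i <- supp] (in_tuple mu).
      by rewrite perm_sym perm_sort.
    case/tuple_permP: Hp => p Hp.
    exists p, (fun a : 'I_(size mu) => (0 <= nth 0 v a)%R) => a.
    have Ha : (a < size supp)%N by rewrite -size_mu.
    have : nth 0%N [seq `|Z i|%N | i <- supp] a = nth 0%N mu (p a).
      rewrite Hp.
      have Ha' : (a < size [tuple tnth (in_tuple mu) (p i) | i < size mu])%N.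
        by rewrite size_tuple.
      rewrite (_ : nth 0%N _ a = tnth [tuple tnth (in_tuple mu) (p i) | i < size mu] a).
        by rewrite tnth_mktuple (tnth_nth 0%N).
      by rewrite (tnth_nth 0%N).
    rewrite (nth_map d) // nth_pvec => <-.
    rewrite nth_v //; set w := sg * Z _.
    have -> : `|Z (nth d supp a)|%N = `|w|%N.
      by rewrite /w abszM /sg; case: ifP => _ /=; rewrite ?mul1n.
    exact: signv_abs.
  by rewrite nth_v.
move=> x Hx; rewrite inE.
pose F i := Z i * signv (x i).
have E1 : \sum_(i <- supp) F i = \sum_i F i.
  rewrite big_filter big_enum_cond /=.
  rewrite [RHS](bigID (fun i => Z i != 0)) /= [X in _ = _ + X]big1 ?addr0 //.
  by move=> i /negPn /eqP Zi; rewrite /F Zi mul0r.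
have E2 : \sum_(a < size mu) nth 0 v a * signv ([ffun j => x (f j)] a)
          = sg * \sum_(i <- supp) F i.
  rewrite mulr_sumr (big_nth d) -size_mu big_mkord; apply: eq_bigr => a _.
  by rewrite ffunE nth_v ?mulrA // -size_mu.
by rewrite E2 E1 HZ // mulr0.
Qed.

Lemma intify k (z : 'I_k -> rat) :
  exists2 D : rat, D != 0 & exists Z : 'I_k -> int, forall i, (Z i)%:~R = D * z i.
Proof.
exists (\prod_j (denq (z j))%:~R).
  by rewrite prodf_seq_neq0; apply/allP => j _; rewrite intr_eq0 denq_neq0.
exists (fun i => numq (z i) * \prod_(j | j != i) denq (z j)) => i.
rewrite intrM rmorph_prod /= [in RHS](bigD1 i) //= numqE.
by rewrite [RHS]mulrC mulrA.
Qed.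

Lemma rank_part l : is_partition l -> novel l -> \rank (Amat l) = (size l).-1.
Proof.
move=> Hl [_ Hnr _]; apply/eqP; apply/negPn/negP => Hr.
have [z [zA z0 zd]] := key2 Hl Hr.
have [D D0 [Z HZ]] := intify (fun i => z 0 i).
have [mu [Hmu Hs]] : exists mu, is_partition mu /\ strictly_reduces l mu.
  apply: (construct (Z := Z)).
  - by apply/eqP; rewrite -(intr_eq0 rat) HZ zd mulr0.
  - case: (pickP (fun i => z 0 i != 0)) => [i zi|H]; last first.
      move/negP: z0; case; apply/eqP/rowP => i; rewrite mxE.
      by apply/eqP/negPn; rewrite H.
    exists i; rewrite -(intr_eq0 rat) HZ mulf_neq0 //.
  - move=> x Hx; apply/eqP; rewrite sum_intr.
    have := (proj1 (Amat_kerP z) zA x Hx) => H.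
    under eq_bigr do rewrite HZ -mulrA.
    by rewrite -mulr_sumr H mulr0.
exact: (Hnr mu Hmu Hs).
Qed.

Lemma gcd_dvd l i : (gcd_seq l %| nth 0%N l i)%N.
Proof.
elim: l i => [|a s IH] [|i] //=; first exact: dvdn_gcdl.
exact: dvdn_trans (dvdn_gcdr _ _) (IH i).
Qed.

Lemma gcd_part l : is_partition l -> novel l -> gcd_seq l = 1%N.
Proof.
move=> Hl [_ _ Hlex]; apply/eqP; apply/negPn/negP => Hg.
set g := gcd_seq l.
have l0 := part_pos Hl (part_size Hl).
have g0 : (0 < g)%N.
  rewrite lt0n; apply/negP => /eqP g0.
  by have := gcd_dvd l 0; rewrite -/g g0 dvd0n => /eqP H; rewrite H in l0.
have g2 : (1 < g)%N by move: g0 Hg; rewrite -/g; lia.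
set mu := [seq (a %/ g)%N | a <- l].
have nth_mu i : (i < size l)%N -> nth 0%N mu i = (nth 0%N l i %/ g)%N.
  by move=> Hi; rewrite (nth_map 0%N).
have Hmu : is_partition mu.
  case/and3P: Hl => H1 H2 /allP H3; apply/and3P; split.
  - by rewrite size_map.
  - rewrite sorted_map; apply: sub_sorted H2 => a b /= Hab; exact: leq_div2r.
  - apply/allP => b /mapP [a Ha ->]; rewrite divn_gt0 //.
    apply: dvdn_leq; first exact: H3.
    have [i Hi <-] : exists2 i, (i < size l)%N & nth 0%N l i = a.
      by exists (index a l); rewrite ?index_mem ?nth_index.
    exact: gcd_dvd.
have := Hlex mu Hmu.
have Hsz : size mu = size l by rewrite size_map.
have -> : lexle l mu = false.
  move: l0; rewrite /mu; case: (l) => [|a s] //= a0.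
  by rewrite ltnNge leq_div /= gtn_eqF // ltn_Pdiv.
move=> H; suff : false by []; apply: H; split; first by rewrite Hsz.
exists (pvec mu); split.
- split; first by rewrite size_map.
    exists 1%g, (fun _ => true) => i; by rewrite perm1 mul1r.
  by rewrite nth_pvec ltz_nat -/mu nth_mu ?part_size // divn_gt0 // dvdn_leq // gcd_dvd.
- apply/setP => x; rewrite in_lamperp in_perpB.
  have E : \sum_(i < size l) (nth 0%N l i)%:R * (signv (x i))%:~R =
           g%:R * \sum_(i < size l) ((nth 0 (pvec mu) i)%:~R * (signv (x i))%:~R : rat).
    rewrite mulr_sumr; apply: eq_bigr => i _.
    rewrite nth_pvec nth_mu // mulrA -natrM -[in LHS](divnK (gcd_dvd l i)).
    by rewrite mulnC.
  by rewrite E mulf_eq0 pnatr_eq0 eqn0Ngt g0.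
Qed.

Lemma gcd_int l (c : rat) :
  (forall i, (i < size l)%N -> c * (nth 0%N l i)%:R \is a Num.int) ->
  c * (gcd_seq l)%:R \is a Num.int.
Proof.
elim: l => [|a s IH] H /=; first by rewrite mulr0 rpred0.
have Ha := H 0%N isT.
have Hs := IH (fun i Hi => H i.+1 Hi).
case: (Bezoutz a (gcd_seq s)) => u [v E].
have -> : (gcdn a (gcd_seq s))%:R = ((gcdz a (gcd_seq s))%:~R : rat) by [].
rewrite -E rmorphD !rmorphM /= mulrDr !mulrA ![c * _]mulrC -!mulrA.
by rewrite rpredD // rpredM // intr_int.
Qed.

Lemma lexle_mul n s : (0 < n)%N -> lexle s (map (muln n) s).
Proof.
move=> n0; elim: s => [|a s IH] //=.
case: (ltnP a (n * a)) => //= H.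
have -> : a == n * a by rewrite eqn_leq H leq_pmull.
by rewrite IH.
Qed.

Lemma abs_signv b (x : nat) : absz (signv b * Posz x) = x.
Proof. by case: b; rewrite ?mul1r ?mulN1r ?abszN. Qed.

Lemma lexmin l (Hl : is_partition l) : \rank (Amat l) = (size l).-1 ->
  gcd_seq l = 1%N -> forall mu, is_partition mu -> equivalent l mu -> lexle l mu.
Proof.
move=> Hr Hg mu Hmu [Hsz [w [[Hw [s [e Hse]] w0] Hperp]]].
pose u : 'rV[rat]_(size l) := \row_i (nth 0 w i)%:~R.
have uA : u *m Amat l = 0.
  apply/Amat_kerP => x Hx.
  have : x \in perpB (size l) w by rewrite -Hperp.
  rewrite in_perpB => /eqP H; apply: etrans H; apply: eq_bigr => i _.
  by rewrite mxE.
have [c Hc] := key1 Hl Hr uA.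
have wc i : (i < size l)%N -> (nth 0 w i)%:~R = c * (nth 0%N l i)%:R.
  by move=> Hi; move/rowP: Hc => /(_ (Ordinal Hi)); rewrite !mxE.
have cint : c \is a Num.int.
  have := gcd_int (l := l) (c := c); rewrite Hg mulr1; apply => i Hi.
  by rewrite -wc // intr_int.
case/intrP: cint => n' Hn'.
have wn i : (i < size l)%N -> nth 0 w i = n' * Posz (nth 0%N l i).
  by move=> Hi; apply: (@intr_inj rat); rewrite wc // Hn' intrM.
have n'pos : 0 < n'.
  move: w0; rewrite wn ?part_size // pmulr_lgt0 //.
  by rewrite ltz_nat part_pos // part_size.
case: n' Hn' wn n'pos => // n _ wn n0.
have Hmun : [seq (n * a)%N | a <- l] = [tuple tnth (in_tuple mu) (s i) | i < size mu].
  apply: (@eq_from_nth _ 0%N); first by rewrite size_map size_tuple.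
  move=> a; rewrite size_map => Ha.
  have Ha' : (a < size mu)%N by rewrite -Hsz.
  rewrite (nth_map 0%N) //.
  rewrite -[a]/(val (Ordinal Ha')) -tnth_nth tnth_mktuple (tnth_nth 0%N) /=.
  have := Hse (Ordinal Ha'); rewrite wn //= nth_pvec => /(congr1 absz).
  by rewrite abs_signv /= => <-.
have Hp : perm_eq [seq (n * a)%N | a <- l] (in_tuple mu).
  by apply/tuple_permP; exists s; rewrite Hmun.
have -> : mu = [seq (n * a)%N | a <- l].
  apply: (@sorted_eq _ geq).
  - by move=> a b c0 H1 H2; exact: leq_trans H2 H1.
  - by move=> a b /andP [H1 H2]; apply/eqP; rewrite eqn_leq; apply/andP.
  - by case/and3P: Hmu.
  - rewrite sorted_map; case/and3P: Hl => _ H _; apply: sub_sorted H.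
    by move=> a b /=; rewrite leq_mul2l => ->; rewrite orbT.
  - by rewrite perm_sym.
by apply: lexle_mul; rewrite -(ltz_nat 0).
Qed.

Lemma inc_ge m n (f : 'I_m -> 'I_n) :
  (forall i j : 'I_m, (i < j)%N -> (f i < f j)%N) -> forall i : 'I_m, (i <= f i)%N.
Proof.
move=> Hf i; have [k Hk] : exists k, val i = k by exists (val i).
elim: k i Hk => [|k IH] i Hk; first by rewrite Hk.
have Hk' : (k < m)%N by move: (ltn_ord i); rewrite Hk; lia.
have := IH (Ordinal Hk') erefl.
have := Hf (Ordinal Hk') i; rewrite Hk /= ltnSn => /(_ isT) H1 H2.
exact: leq_ltn_trans H2 H1.
Qed.

Lemma inc_id m n (f : 'I_m -> 'I_n) : m = n ->
  (forall i j : 'I_m, (i < j)%N -> (f i < f j)%N) -> forall i : 'I_m, val (f i) = val i.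
Proof.
move=> Emn Hf i; apply/eqP; rewrite eqn_leq; apply/andP; split; last exact: inc_ge.
pose h (a : 'I_m) : 'I_n := rev_ord (f (rev_ord a)).
have Hh : forall a b : 'I_m, (a < b)%N -> (h a < h b)%N.
  move=> a b Hab; rewrite /h /=.
  have H : (rev_ord b < rev_ord a)%N.
    by rewrite /=; move: (ltn_ord a) (ltn_ord b) Hab; move: (val a) (val b); lia.
  move: (Hf _ _ H) (ltn_ord (f (rev_ord a))) (ltn_ord (f (rev_ord b))).
  move: (val (f (rev_ord a))) (val (f (rev_ord b))); lia.
have := inc_ge Hh (rev_ord i); rewrite /h /= rev_ordK.
move: (ltn_ord i) (ltn_ord (f i)) Emn; move: (val i) (val (f i)); lia.
Qed.

Lemma signv_eq b b' : signv (b == b') = signv b * signv b'.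
Proof. by case: b; case: b'. Qed.

Lemma nostrict l (Hl : is_partition l) : \rank (Amat l) = (size l).-1 ->
  forall mu, is_partition mu -> reduces l mu -> reduces mu l.
Proof.
move=> Hr mu Hmu [Hle [f [Hf [v [[Hv [s [e Hse]] v0] Hproj]]]]].
have finj : injective f.
  move=> a b Hab; apply: val_inj; case: (ltngtP (val a) (val b)) => [H|H|//].
  - by have := Hf _ _ H; rewrite Hab ltnn.
  - by have := Hf _ _ H; rewrite Hab ltnn.
pose u : 'rV[rat]_(size l) :=
  \row_i \sum_(a < size mu) (f a == i)%:R * (nth 0 v a)%:~R.
have uf a : u 0 (f a) = (nth 0 v a)%:~R.
  rewrite mxE (bigD1 a) //= eqxx mul1r big1 ?addr0 // => b Hb.
  by rewrite (inj_eq finj) (negbTE Hb) mul0r.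
have uA : u *m Amat l = 0.
  apply/Amat_kerP => x Hx.
  have := Hproj x Hx; rewrite in_perpB => /eqP H; apply: etrans H.
  under eq_bigr do rewrite mxE mulr_suml.
  rewrite exchange_big; apply: eq_bigr => a _ /=.
  rewrite (bigD1 (f a)) //= eqxx mul1r big1 ?addr0 ?ffunE // => i Hi.
  by move: Hi; rewrite eq_sym => /negbTE ->; rewrite !mul0r.
have [c Hc] := key1 Hl Hr uA.
have uc i : u 0 i = c * (nth 0%N l i)%:R by move/rowP: Hc => /(_ i); rewrite !mxE.
have a0 := part_size Hmu.
have c0 : c != 0.
  apply/eqP => c0; move: v0; have := uf (Ordinal a0); rewrite uc c0 mul0r.
  move=> H; have Hv0 : (v`_0)%:~R = 0 :> rat by rewrite [RHS]H.
  by move: Hv0 => /eqP; rewrite intr_eq0 => /eqP ->.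
have j_eq : size mu = size l.
  case: (ltnP (size mu) (size l)) => Hlt; last by apply/eqP; rewrite eqn_leq Hle Hlt.
  have [i0 Hi0] : exists i0, forall a, f a != i0.
    case: (pickP (fun i => [forall a, f a != i])) => [i0 H|H].
      by exists i0 => a; move/forallP: H; apply.
    have : (#|'I_(size l)| <= size (codom f))%N.
      apply: leq_trans (card_size _); apply: subset_leq_card; apply/subsetP => i _.
      have := H i; move/negbT/forallPn => [a /negPn /eqP fa].
      by apply/codomP; exists a.
    by rewrite size_codom !card_ord leqNgt Hlt.
  move/eqP: c0; case.
  have : u 0 i0 = 0.
    by rewrite mxE big1 // => a _; rewrite (negbTE (Hi0 a)) mul0r.
  rewrite uc => /eqP; rewrite mulf_eq0 pnatr_eq0 => /orP [/eqP //|/eqP H].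
  by have := part_pos Hl (ltn_ord i0); rewrite H.
have fid := inc_id j_eq Hf.
have vc a : (a < size mu)%N -> (nth 0 v a)%:~R = c * (nth 0%N l a)%:R.
  by move=> Ha; have := uf (Ordinal Ha); rewrite uc fid.
pose g := cast_ord (esym j_eq).
pose pc := (0 < c).
pose aof (i : 'I_(size l)) := (s^-1)%g (g i).
pose W (i : 'I_(size l)) : int := signv (e (aof i) == pc) * Posz (nth 0%N l (aof i)).
have nc : `|c| = (signv pc)%:~R * c.
  rewrite /pc; case: (boolP (0 < c)) => H /=; first by rewrite mul1r gtr0_norm.
  rewrite mulN1r ltr0_norm // lt_neqAle c0 /=; move: H; by rewrite -leNgt.
have key i : (W i)%:~R * `|c| = ((nth 0%N mu (g i))%:R : rat).
  have Hs := Hse (aof i); rewrite nth_pvec /aof permKV in Hs.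
  have := vc _ (ltn_ord (aof i)); rewrite Hs intrM => Hvv.
  have E1 : ((nth 0%N mu (g i))%:R : rat) =
            (signv (e (aof i)))%:~R * (c * (nth 0%N l (aof i))%:R).
    by rewrite -Hvv mulrA -intrM signv_sq mul1r.
  have sq : (signv pc)%:~R * (signv pc)%:~R = 1 :> rat by rewrite -intrM signv_sq.
  rewrite E1 nc /W signv_eq !intrM.
  transitivity ((signv (e (aof i)))%:~R * (c * (nth 0%N l (aof i))%:R) *
                ((signv pc)%:~R * (signv pc)%:~R) : rat); last by rewrite sq mulr1.
  by ring.
have cpos : 0 < `|c| by rewrite normr_gt0.
pose w := [seq W i | i <- enum 'I_(size l)].
have nth_w (i : 'I_(size l)) : nth 0 w i = W i.
  by rewrite (nth_map i) ?size_enum_ord // nth_ord_enum.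
split; first by rewrite j_eq.
exists g; split; first by [].
exists w; split.
  split; first by rewrite size_map size_enum_ord.
    exists (cast_perm j_eq (s^-1)%g), (fun i => e (aof i) == pc) => i.
    by rewrite nth_w /W nth_pvec cast_permE.
  set i0 := Ordinal (part_size Hl).
  rewrite -[0%N]/(val i0) nth_w -(ltr0z rat) -(pmulr_lgt0 _ cpos) key ltr0n.
  by apply: part_pos.
move=> x Hx; rewrite in_perpB.
move: Hx; rewrite in_lamperp => /eqP Hx.
have E : (\sum_(i < size l) (nth 0 w i)%:~R * (signv ([ffun j => x (g j)] i))%:~R) * `|c|
         = \sum_(i < size mu) (nth 0%N mu i)%:R * (signv (x i))%:~R.
  rewrite mulr_suml; under eq_bigr do rewrite ffunE nth_w mulrAC key.
  rewrite [RHS](reindex g) //; apply: onW_bij; exists (cast_ord j_eq) => i;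
    by apply: val_inj.
by move: E; rewrite Hx => /eqP; rewrite mulf_eq0 normr_eq0 (negbTE c0) orbF.
Qed.

Local Close Scope ring_scope.

Theorem mainTheorem3 (l : seq nat) :
  is_partition l -> lamperp l != set0 ->
  (novel l <-> \rank (Amat l) = (size l).-1 /\ gcd_seq l = 1).
Proof.
move=> Hl Hne; split.
- by move=> Hn; split; [exact: rank_part | exact: gcd_part].
- move=> [Hr Hg]; split => //.
  + move=> mu Hmu [Hred Hnot]; apply: Hnot; exact: (nostrict Hl Hr Hmu Hred).
  + exact: lexmin.
Qed.

Print Assumptions mainTheorem3.
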